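(* Assume (C1)–(C3). Let $\alpha\in(0,1)$ and suppose there are $\gamma>0$, $\Gamma>0$ and $r_0\ge0$ such that $$A(x)-\Big(1-\frac{\gamma}{2}\Big)C_0(x)+B_0(x)\le-\Gamma|x|^{\gamma\alpha-\gamma+2},\qquad |x|\ge r_0,$$ and suppose further that $\gamma<2/(1-\alpha)$ and that there is $\Delta\ge1$ with $\Delta^{-1}\le C_0(x)\le\Delta$ for all $|x|\ge r_0$. Then there is $r'\ge r_0$ such that, with $I_0(r):=\int_{r'}^r\frac{\iota_0(s)}{s}ds$ for $r\ge r'$, $$\int_{r'}^\infty\Big(\int_{r'}^u e^{-I_0(v)}dv+1\Big)^\alpha\frac{e^{I_0(u)}}{\gamma_0(u)}du<\infty,$$ i.e. the integrability condition of Theorem 1.1 holds with $x_0=0$, base radius $r'$ and $\varphi(t)=t^\alpha$.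
   Context: Let $b:\mathbb{R}^d\to\mathbb{R}^d$, $\sigma:\mathbb{R}^d\to\mathbb{R}^{d\times n}$ Borel measurable, $\|M\|_{\mathrm{HS}}^2=\mathrm{Tr}\,MM^T$. (C1) for every $r>0$, $\sup_{|x|<r}(|b(x)|+\|\sigma(x)\|_{\mathrm{HS}})<\infty$; (C2) for every $r>0$ there is $\Gamma_r>0$ with $2\langle x-y,b(x)-b(y)\rangle+\|\sigma(x)-\sigma(y)\|^2_{\mathrm{HS}}\le\Gamma_r|x-y|^2$ for $|x|,|y|<r$; (C3) there is $\Gamma>0$ with $2\langle x,b(x)\rangle+\|\sigma(x)\|^2_{\mathrm{HS}}\le\Gamma(1+|x|^2)$. Notation: $c=\sigma\sigma^T$, $A(x)=\frac12\mathrm{Tr}\,c(x)$, $B_0(x)=\langle x,b(x)\rangle$, $C_0(x)=\langle x,c(x)x\rangle/|x|^2$ ($x\ne0$), $\gamma_0(r)=\inf_{|x|=r}C_0(x)$, $\iota_0(r)=\sup_{|x|=r}\frac{2A(x)-C_0(x)+2B_0(x)}{C_0(x)}$. *)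

(* Defs.v *)
From HB Require Import structures.
From mathcomp Require Import all_boot all_order all_algebra.
From mathcomp Require Import all_classical all_reals all_analysis.
Set Implicit Arguments. Unset Strict Implicit. Unset Printing Implicit Defensive.
Import Order.TTheory GRing.Theory Num.Theory.
Import numFieldNormedType.Exports.
Local Open Scope classical_set_scope.
Local Open Scope ring_scope.

Definition dotv (R : realType) (d : nat) (x y : 'cV[R]_d) : R :=
  \sum_(i < d) x i 0 * y i 0.
Definition enorm (R : realType) (d : nat) (x : 'cV[R]_d) : R :=
  Num.sqrt (dotv x x).

Definition hs2 (R : realType) (d n : nat) (M : 'M[R]_(d, n)) : R :=
  \tr (M *m M^T).
Definition hs (R : realType) (d n : nat) (M : 'M[R]_(d, n)) : R :=
  Num.sqrt (hs2 M).

Definition borel_fun (T U : topologicalType) (f : T -> U) : Prop :=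
  forall A : set U, open A -> <<s [set: T], [set B : set T | open B] >> (f @^-1` A).

Section Coefs.
Variables (R : realType) (d n : nat).
Variables (b : 'cV[R]_d -> 'cV[R]_d) (sigma : 'cV[R]_d -> 'M[R]_(d, n)).

Definition cmat (x : 'cV[R]_d) : 'M[R]_d := sigma x *m (sigma x)^T.
Definition Acoef (x : 'cV[R]_d) : R := 2^-1 * \tr (cmat x).
Definition B0 (x : 'cV[R]_d) : R := dotv x (b x).
(* C0 x = <x, c(x) x> / |x|^2, meaningful for x <> 0 *)
Definition C0 (x : 'cV[R]_d) : R := dotv x (cmat x *m x) / (enorm x ^+ 2).
Definition sphere (r : R) : set 'cV[R]_d := [set x | enorm x = r].
Definition gamma0 (r : R) : R := inf [set C0 x | x in sphere r].
Definition iota0 (r : R) : R :=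
  sup [set (2 * Acoef x - C0 x + 2 * B0 x) / C0 x | x in sphere r].

End Coefs.

Definition I0 (R : realType) (d n : nat) (b : 'cV[R]_d -> 'cV[R]_d)
  (sigma : 'cV[R]_d -> 'M[R]_(d, n)) (r' r : R) : R :=
  (\int[lebesgue_measure]_(s in `[r', r]) (iota0 b sigma s / s))%R.

(* Main.v *)
Require Import Defs.
From HB Require Import structures.
From mathcomp Require Import all_boot all_order all_algebra.
From mathcomp Require Import all_classical all_reals all_analysis.
From mathcomp Require Import ring lra.
Import Order.TTheory GRing.Theory Num.Theory.
Import numFieldNormedType.Exports.
Local Open Scope classical_set_scope.
Local Open Scope ring_scope.

Lemma nm_le_integral (R : realType) (D : set R) (f g : R -> \bar R) :
  (forall x, D x -> 0 <= f x)%E -> (forall x, D x -> f x <= g x)%E ->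
  (\int[lebesgue_measure]_(x in D) f x <= \int[lebesgue_measure]_(x in D) g x)%E.
Proof.
move=> f0 fg.
have g0 : forall x, D x -> (0 <= g x)%E.
  by move=> x Dx; exact: le_trans (f0 _ Dx) (fg _ Dx).
rewrite !ge0_integralE//.
apply: ereal_sup_le => _ [h /= hf <-]; exists h => //= x.
exact: le_trans (hf x) (lee_restrict fg x).
Qed.

Lemma itv_le_integral (R : realType) (a v u : R) (g : R -> R) :
  v <= u -> (forall x, a <= x <= u -> 0 <= g x) ->
  (\int[lebesgue_measure]_(x in `[a, v]) (g x)%:E <=
   \int[lebesgue_measure]_(x in `[a, u]) (g x)%:E)%E.
Proof.
move=> vu g0.
rewrite integral_mkcond [X in (_ <= X)%E]integral_mkcond.
apply: nm_le_integral => x _; rewrite /patch.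
  by case: ifPn => // /set_mem /=; rewrite in_itv /= => /andP[ax xv];
     rewrite lee_fin g0 // ax (le_trans xv vu).
case: ifPn => [/set_mem|_].
  rewrite /= in_itv /= => /andP[ax xv].
  rewrite ifT //; apply/mem_set; rewrite /= in_itv /= ax (le_trans xv vu) //.
case: ifPn => // /set_mem /=; rewrite in_itv /= => /andP[ax xu].
by rewrite lee_fin g0 // ax.
Qed.

Lemma integral_itv_cst (R : realType) (a b c : R) : a <= b ->
  (\int[lebesgue_measure]_(x in `[a, b]) c%:E = (c * (b - a))%:E)%E.
Proof.
move=> ab.
have := integral_cst (@lebesgue_measure R) (measurable_itv `[a, b]) c%:E.
rewrite /cst => ->; rewrite /= lebesgue_measure_itv /= lte_fin.
case: ltP => [ab'|ba]; first by rewrite -EFinD -EFinM.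
have -> : b = a by apply/le_anti; rewrite ab ba.
by rewrite subrr mulr0 mule0.
Qed.

Lemma deriv_F (R : realType) (K x : R) : x != 0 ->
  is_derive x 1 (fun y : R => - (K * y^-1)) (K / x ^+ 2).
Proof.
move=> x0.
have h1 : is_derive x 1 (fun y : R => y^-1) (- x ^- 2 *: 1).
  exact: (@is_deriveV R id x 1 1 x0 (is_derive_id x 1)).
have h2 := is_deriveN (is_deriveZ K h1).
apply: is_derive_eq h2 _.
by rewrite /GRing.scale /= mulr1 mulrN opprK.
Qed.

Lemma int_inv2 (R : realType) (a K : R) : 0 < a -> 0 <= K ->
  (\int[lebesgue_measure]_(x in `[a, +oo[) (K / x ^+ 2)%:E = (K / a)%:E)%E.
Proof.
move=> a0 K0.
have dF (x : R) : 0 < x -> is_derive x 1 (fun y : R => - (K * y^-1)) (K / x ^+ 2).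
  by move=> x0; apply: deriv_F; rewrite gt_eqF.
have cF : forall x : R, 0 < x -> {for x, continuous (fun y : R => - (K * y^-1))}.
  move=> x x0.
  apply: differentiable_continuous; apply/derivable1_diffP.
  by have [] := dF x x0.
rewrite (@ge0_continuous_FTC2y R (fun x => K / x ^+ 2) (fun y : R => - (K * y^-1)) a 0).
- by rewrite -EFinB sub0r opprK.
- by move=> x ax; rewrite divr_ge0 // sqr_ge0.
- apply: continuous_subspaceW (derivable_within_continuous (i := `]0, +oo[) _).
  + by move=> x /=; rewrite !in_itv /= !andbT => ax; rewrite (lt_le_trans a0 ax).
  + move=> x; rewrite in_itv /= andbT => x0.
    have h : derivable (fun y : R => K / y ^+ 2) x 1.
      apply: derivableM; first exact: derivable_cst.
      apply: derivableV; first by rewrite expf_neq0 // gt_eqF.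
      by have [] := @is_deriveX R R id 2 x 1 1 (is_derive_id x 1).
    exact: h.
- have h : (fun x : R => x^-1) x @[x --> +oo] --> 0.
    apply/gtr0_cvgV0; last exact: cvg_id.
    by near=> x.
  rewrite -oppr0 -(mulr0 K); apply: cvgN; apply: cvgM; [exact: cvg_cst|exact: h].
- by move=> x ax; have [] := dF x (lt_trans a0 ax).
- by apply: cvg_at_right_filter; apply: cF.
- move=> x; rewrite in_itv /= andbT => ax.
  by rewrite derive1E; have [_ ->] := dF x (lt_trans a0 ax).
Unshelve. all: by end_near. Qed.

Lemma powR_le_expR (R : realType) (y m : R) : 0 <= y -> 0 < m ->
  (y / m) `^ m <= expR y.
Proof.
move=> y0 m0.
have -> : expR y = expR (y / m) `^ m by rewrite -expRM mulrVK // unitfE gt_eqF.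
apply: ge0_ler_powR; first exact: ltW.
- by rewrite nnegrE divr_ge0 // ltW.
- by rewrite nnegrE expR_ge0.
- apply: le_trans (expR_ge1Dx _); by rewrite lerDr.
Qed.

Lemma dotv_e0 (R : realType) (d : nat) (s : R) (y : 'cV[R]_d.+1) :
  dotv (s *: delta_mx 0 0) y = s * y 0 0.
Proof.
rewrite /dotv (bigD1 ord0) //= big1 ?addr0; first by rewrite !mxE eqxx mulr1.
by move=> i /negPf ni; rewrite !mxE ni mulr0 mul0r.
Qed.

Lemma enorm_pt (R : realType) (d : nat) (s : R) : 0 <= s ->
  enorm (s *: (delta_mx 0 0 : 'cV[R]_d.+1)) = s.
Proof.
move=> s0; rewrite /enorm dotv_e0 !mxE eqxx mulr1 -expr2 sqrtr_sqr ger0_norm //.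
Qed.

Lemma enorm0 (R : realType) (d : nat) : enorm (0 : 'cV[R]_d) = 0.
Proof.
by rewrite /enorm /dotv big1 ?sqrtr0 // => i _; rewrite mxE mul0r.
Qed.

Lemma enorm_ge0 (R : realType) (d : nat) (x : 'cV[R]_d) : 0 <= enorm x.
Proof. exact: sqrtr_ge0. Qed.

Lemma hs_ge0 (R : realType) (d n : nat) (x : 'M[R]_(d, n)) : 0 <= hs x.
Proof. exact: sqrtr_ge0. Qed.

Lemma pt_neq0 (R : realType) (d : nat) (s : R) : s != 0 ->
  s *: (delta_mx 0 0 : 'cV[R]_d.+1) != 0.
Proof.
move=> s0; apply/eqP => /matrixP /(_ 0 0); rewrite !mxE eqxx mulr1 => h.
by move/eqP: s0.
Qed.

Lemma coord_le_enorm (R : realType) (d : nat) (y : 'cV[R]_d.+1) :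
  `|y 0 0| <= enorm y.
Proof.
rewrite /enorm /dotv (bigD1 ord0) //= -sqrtr_sqr; apply: ler_wsqrtr.
rewrite expr2 lerDl; apply: sumr_ge0 => i _; rewrite -expr2 sqr_ge0 //.
Qed.

Lemma Acoef_ge0 (R : realType) (d n : nat) (sigma : 'cV[R]_d -> 'M[R]_(d, n)) x :
  0 <= Acoef sigma x.
Proof.
rewrite /Acoef /cmat /mxtrace; apply: mulr_ge0; first by rewrite invr_ge0.
apply: sumr_ge0 => i _; rewrite !mxE; apply: sumr_ge0 => j _.
by rewrite !mxE -expr2 sqr_ge0.
Qed.

Lemma fine_le_bound (R : realType) (x : \bar R) (y : R) :
  (0 <= x)%E -> (x <= y%:E)%E -> fine x <= y.
Proof.
move=> x0 xy.
have xf : x \is a fin_num by rewrite ge0_fin_numE // (le_lt_trans xy) // ltry.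
by rewrite -lee_fin fineK.
Qed.

Arguments enorm_ge0 {R d}.
Arguments hs_ge0 {R d n}.
Arguments coord_le_enorm {R d}.
Arguments Acoef_ge0 {R d n}.
Arguments enorm_pt {R d}.
Arguments pt_neq0 {R d}.
Arguments dotv_e0 {R d}.

Lemma G_bound (R : realType) (alpha Delta r' u J I ga c p ka A : R) :
  0 < alpha < 1 -> 1 <= Delta -> 1 <= r' -> r' <= u ->
  0 <= J -> J <= (u - r') * expR (- I) -> I <= 0 ->
  Delta^-1 <= ga ->
  (2 * r' <= u -> I <= - (c / 2 * (u / 2) `^ p)) ->
  ka = (1 - alpha) * (c / 2) -> 0 < A ->
  (forall w, 0 <= w -> A * w ^+ 3 <= expR (ka * w `^ p)) ->
  0 <= (J + 1) `^ alpha * expR I / ga <=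
    (12 * Delta / A + Delta * (2 * r' + 1) * (2 * r') ^+ 2) / u ^+ 2.
Proof.
move=> /andP[al0 al1] hDelta r'1 hu J0 J1 hI hga hI2 hka A0 expo.
have D0 : 0 < Delta := lt_le_trans ltr01 hDelta.
have u0 : 0 < u by lra.
have ga0 : 0 < ga by apply: lt_le_trans hga; rewrite invr_gt0.
set K := 12 * Delta / A + Delta * (2 * r' + 1) * (2 * r') ^+ 2.
  have E1 : 1 <= expR (- I) by apply: le_trans (expR_ge1Dx _); lra.
  have hJ : J + 1 <= (u + 1) * expR (- I).
    have : 0 <= r' * expR (- I) by apply: mulr_ge0; [lra|exact: expR_ge0].
    lra.
  have step1 : (J + 1) `^ alpha <= (u + 1) * expR (- I * alpha).
    apply: le_trans (_ : _ <= ((u + 1) * expR (- I)) `^ alpha) _.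
      apply: ge0_ler_powR; [lra|rewrite nnegrE; lra| |done].
      by rewrite nnegrE; apply: mulr_ge0; [lra|exact: expR_ge0].
    rewrite expRM powRM; [|lra|exact: expR_ge0].
    apply: ler_wpM2r; [exact: powR_ge0|apply: ler1_powR; lra].
  set Z := expR ((1 - alpha) * I).
  have Z0 : 0 <= Z by exact: expR_ge0.
  have hX : (J + 1) `^ alpha * expR I <= (u + 1) * Z.
    apply: le_trans (ler_wpM2r (expR_ge0 I) step1) _.
    by rewrite -mulrA -expRD /Z; apply: ler_wpM2l; [lra|rewrite ler_expR; lra].
  have X0 : 0 <= (J + 1) `^ alpha * expR I by apply: mulr_ge0; [exact: powR_ge0|exact: expR_ge0].
  have hDg : 1 <= Delta * ga.
    by have := ler_wpM2l (ltW D0) hga; rewrite mulfV ?gt_eqF.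
  have hG : (J + 1) `^ alpha * expR I / ga <= Delta * ((u + 1) * Z).
    rewrite ler_pdivrMr //.
    have : 0 <= ((u + 1) * Z) * (Delta * ga - 1) by apply: mulr_ge0; [apply: mulr_ge0; lra|lra].
    lra.
  set G := (J + 1) `^ alpha * expR I / ga in hG *.
  have G0 : 0 <= G by apply: divr_ge0 => //; exact: ltW.
  apply/andP; split => //.
  rewrite ler_pdivlMr ?exprn_gt0 //.
  have hu2 : 0 <= u ^+ 2 by exact: sqr_ge0.
  have hGu : G * u ^+ 2 <= Delta * ((u + 1) * Z) * u ^+ 2 by exact: ler_wpM2r.
  have KA : 0 <= 12 * Delta / A by apply: divr_ge0; [lra|exact: ltW].
  have [hu2r|hu2r] := leP u (2 * r').
  - have Z1 : Z <= 1 by rewrite /Z expR_le1; nra.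
    have h1 : Delta * ((u + 1) * Z) <= Delta * (2 * r' + 1).
      have : 0 <= Delta * ((u + 1) * (1 - Z)) by apply: mulr_ge0; [lra|apply: mulr_ge0; lra].
      have : 0 <= Delta * (2 * r' - u) by apply: mulr_ge0; lra.
      lra.
    have h2 : u ^+ 2 <= (2 * r') ^+ 2 by rewrite !expr2; nra.
    have h3 : Delta * ((u + 1) * Z) * u ^+ 2 <= Delta * (2 * r' + 1) * (2 * r') ^+ 2.
      apply: ler_pM => //; apply: mulr_ge0; [lra|apply: mulr_ge0; lra].
    rewrite /K; lra.
  - have hw : 2 * r' <= u by lra.
    have hIu := hI2 hw.
    set w := u / 2 in hIu *.
    have w1 : 1 <= w by rewrite /w; lra.
    have hZ : (1 - alpha) * I <= - (ka * w `^ p).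
      have : 0 <= (1 - alpha) * (- (c / 2 * w `^ p) - I) by apply: mulr_ge0; lra.
      rewrite hka; lra.
    have Q := expo w (le_trans ler01 w1).
    set T := A * w ^+ 3 in Q.
    have ZT : Z * T <= 1.
      apply: le_trans (ler_wpM2l Z0 Q) _.
      apply: le_trans (ler_wpM2r (expR_ge0 _) (_ : Z <= expR (- (ka * w `^ p)))) _.
        by rewrite /Z ler_expR.
      by rewrite -expRD addNr expR0.
    have hT : 12 * Delta / A * (T * Z) = 3 / 2 * Delta * u ^+ 3 * Z.
      by rewrite /T /w; field; rewrite gt_eqF.
    have h4 : Delta * ((u + 1) * Z) * u ^+ 2 <= 3 / 2 * Delta * u ^+ 3 * Z.
      have : 0 <= Delta * Z * u ^+ 2 * (u / 2 - 1).
        by apply: mulr_ge0; [apply: mulr_ge0; [apply: mulr_ge0; lra|done]|lra].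
      rewrite !exprS expr0; lra.
    have h5 : 12 * Delta / A * (T * Z) <= 12 * Delta / A.
      rewrite -[X in _ <= X]mulr1; apply: ler_wpM2l => //; by rewrite mulrC.
    have : 0 <= Delta * (2 * r' + 1) * (2 * r') ^+ 2.
      by apply: mulr_ge0; [apply: mulr_ge0; lra|apply: sqr_ge0].
    rewrite /K; lra.
Qed.
Arguments G_bound {R alpha Delta r' u J I ga c p ka A}.

Theorem proposition2p5 (R : realType) (d n : nat)
  (b : 'cV[R]_d -> 'cV[R]_d) (sigma : 'cV[R]_d -> 'M[R]_(d, n))
  (b_meas : borel_fun b) (sigma_meas : borel_fun sigma)
  (C1 : forall r : R, 0 < r -> exists M : R, forall x : 'cV[R]_d,
          enorm x < r -> enorm (b x) + hs (sigma x) <= M)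
  (C2 : forall r : R, 0 < r -> exists Gr : R, 0 < Gr /\
          forall x y : 'cV[R]_d, enorm x < r -> enorm y < r ->
            2 * dotv (x - y) (b x - b y) + hs2 (sigma x - sigma y)
              <= Gr * enorm (x - y) ^+ 2)
  (C3 : exists G : R, 0 < G /\ forall x : 'cV[R]_d,
          2 * dotv x (b x) + hs2 (sigma x) <= G * (1 + enorm x ^+ 2))
  (alpha gam Gam r0 Delta : R)
  (halpha : 0 < alpha < 1) (hgam : 0 < gam) (hGam : 0 < Gam) (hr0 : 0 <= r0)
  (hdrift : forall x : 'cV[R]_d, x != 0 -> r0 <= enorm x ->
     Acoef sigma x - (1 - gam / 2) * C0 sigma x + B0 b x
       <= - Gam * enorm x `^ (gam * alpha - gam + 2))
  (hgam_small : gam < 2 / (1 - alpha))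
  (hDelta : 1 <= Delta)
  (hC0 : forall x : 'cV[R]_d, x != 0 -> r0 <= enorm x ->
     Delta^-1 <= C0 sigma x <= Delta) :
  exists r' : R, r0 <= r' /\
    (\int[lebesgue_measure]_(u in `[r', +oo[)
       (((\int[lebesgue_measure]_(v in `[r', u]) expR (- I0 b sigma r' v)) + 1)
          `^ alpha * expR (I0 b sigma r' u) / gamma0 sigma u)%:E < +oo)%E.
Proof.
destruct d as [|d].
{ exists (r0 + 1); split; first by rewrite lerDl.
  rewrite integral0_eq //.
  move=> u /=; rewrite in_itv /= andbT => hu.
  have -> : gamma0 sigma u = 0.
    rewrite /gamma0.
    have -> : [set C0 sigma x | x in sphere u] = set0.
      apply/seteqP; split => // z [x hx _]; move: hx; rewrite /sphere /=.
      have -> : enorm x = 0 by rewrite /enorm /dotv big_ord0 sqrtr0.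
      move=> h; exfalso; move: hu; rewrite -h; lra.
    exact: inf0.
  by rewrite invr0 mulr0. }
have [al0 al1] : 0 < alpha /\ alpha < 1 by move/andP: halpha.
have D0 : 0 < Delta := lt_le_trans ltr01 hDelta.
set p := gam * alpha - gam + 2.
have p0 : 0 < p.
  have h1 : 0 < 1 - alpha by lra.
  move: hgam_small; rewrite ltr_pdivlMr // => h; rewrite /p; lra.
set c := Gam / Delta.
have c0 : 0 < c by rewrite divr_gt0.
set r' := Num.max (r0 + 1) ((Delta / Gam) `^ p^-1).
have r'r0 : r0 + 1 <= r' by rewrite le_max lexx.
have r'1 : 1 <= r' by lra.
have r'p : Delta / Gam <= r' `^ p.
  have -> : Delta / Gam = ((Delta / Gam) `^ p^-1) `^ p.
    by rewrite -powRrM mulVf ?gt_eqF // powRr1 // ltW // divr_gt0.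
  apply: ge0_ler_powR; first exact: ltW.
  - by rewrite nnegrE powR_ge0.
  - by rewrite nnegrE; lra.
  - by rewrite le_max lexx orbT.
set e0 := (delta_mx 0 0 : 'cV[R]_d.+1).
have sph (s : R) (x : 'cV[R]_d.+1) : 0 < s -> sphere s x -> x != 0 /\ enorm x = s.
  move=> s0; rewrite /sphere /= => hx; split => //.
  by apply/eqP => x0; move: hx; rewrite x0 enorm0 => h; move: s0; rewrite -h ltxx.
have sph_e0 (s : R) : 0 <= s -> sphere s (s *: e0) by move=> s0; rewrite /sphere /= enorm_pt.
have ub (s : R) x : r' <= s -> enorm x = s ->
    (2 * Acoef sigma x - C0 sigma x + 2 * B0 b x) / C0 sigma x <= - (c * s `^ p).
  move=> hs hx.
  have s0 : 0 < s by lra.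
  have x0 : x != 0 by apply/eqP => x0; move: hx; rewrite x0 enorm0 => h; lra.
  have hr : r0 <= enorm x by rewrite hx; lra.
  have hd := hdrift x x0 hr; have /andP[hc1 hc2] := hC0 x x0 hr.
  rewrite hx -/p in hd.
  have C0p : 0 < C0 sigma x by apply: lt_le_trans hc1; rewrite invr_gt0.
  have hP : Delta <= Gam * s `^ p.
    rewrite -ler_pdivrMl // mulrC; apply: le_trans r'p _.
    apply: ge0_ler_powR; first exact: ltW.
    - by rewrite nnegrE; lra.
    - by rewrite nnegrE; lra.
    - done.
  set P := s `^ p in hd hP *.
  set q := c * P.
  have hq : q * Delta = Gam * P by rewrite /q /c mulrAC divfK // gt_eqF.
  have q1 : 1 <= q.
    by rewrite -(ler_pM2r D0) mul1r hq.
  have q0 : 0 <= q by lra.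
  rewrite ler_pdivrMr //.
  have h1 : 0 <= q * (Delta - C0 sigma x) by apply: mulr_ge0 => //; lra.
  have h2 : 0 <= Delta * (q - 1) by apply: mulr_ge0; lra.
  have h3 : 0 <= gam * C0 sigma x by apply: mulr_ge0; lra.
  move: hd; rewrite -/q; nra.
have hasub (s : R) : r' <= s -> has_ubound
    [set (2 * Acoef sigma x - C0 sigma x + 2 * B0 b x) / C0 sigma x | x in sphere s].
  move=> hs; have s0 : 0 < s by lra.
  exists (- (c * s `^ p)) => _ [x hx <-].
  by apply: ub => //; have [] := sph s x s0 hx.
have iota_up (s : R) : r' <= s -> iota0 b sigma s <= - (c * s `^ p).
  move=> hs; have s0 : 0 < s by lra.
  rewrite /iota0; apply: ge_sup.
    by exists ((2 * Acoef sigma (s *: e0) - C0 sigma (s *: e0) + 2 * B0 b (s *: e0))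
       / C0 sigma (s *: e0)), (s *: e0) => //; apply: sph_e0; lra.
  by move=> _ [x hx <-]; apply: ub => //; have [] := sph s x s0 hx.
have iota_low (u : R) : exists L, 0 <= L /\
    forall s, r' <= s <= u -> - L <= iota0 b sigma s.
  have [M hM] := C1 (`|u| + 1) (ltr_wpDl (normr_ge0 u) ltr01).
  have M0 : 0 <= M.
    have := hM 0; rewrite enorm0 => /(_ (ltr_wpDl (normr_ge0 u) ltr01)).
    have := enorm_ge0 (b 0); have := hs_ge0 (sigma 0); lra.
  exists ((Delta + 2 * ((`|u| + 1) * M)) * Delta); split.
    by apply: mulr_ge0; [rewrite addr_ge0 ?mulr_ge0 //; lra|lra].
  move=> s /andP[hs1 hs2].
  have s0 : 0 < s by lra.
  have hu : s <= `|u| by apply: le_trans hs2 (ler_norm u).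
  set x := s *: e0.
  have hx : enorm x = s by rewrite enorm_pt //; lra.
  apply: le_trans (_ : _ <= (2 * Acoef sigma x - C0 sigma x + 2 * B0 b x) / C0 sigma x) _;
    last first.
    rewrite /iota0; apply: ub_le_sup; first exact: hasub.
    by exists x => //; apply: sph_e0; lra.
  have x0 : x != 0 by apply: pt_neq0; rewrite gt_eqF.
  have hr : r0 <= enorm x by rewrite hx; lra.
  have /andP[hc1 hc2] := hC0 x x0 hr.
  have C0p : 0 < C0 sigma x by apply: lt_le_trans hc1; rewrite invr_gt0.
  have hDC : 1 <= Delta * C0 sigma x.
    by have := ler_wpM2l (ltW D0) hc1; rewrite mulfV ?gt_eqF.
  have hA := Acoef_ge0 sigma x.
  have hB : B0 b x = s * b x 0 0 by rewrite /B0 dotv_e0.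
  have hbM : enorm (b x) <= M.
    have := hM x; rewrite hx => /(_ _)/wrap[]; first lra.
    have := hs_ge0 (sigma x); lra.
  have hy : - M <= b x 0 0.
    have := coord_le_enorm (b x); rewrite ler_norml => /andP[h _]; lra.
  have hsy : - ((`|u| + 1) * M) <= s * b x 0 0.
    have : s * (b x 0 0 + M) >= 0 by apply: mulr_ge0; lra.
    have : (`|u| + 1 - s) * M >= 0 by apply: mulr_ge0; lra.
    nra.
  rewrite ler_pdivlMr //.
  set P0 := Delta + 2 * ((`|u| + 1) * M).
  have hP0 : 0 <= P0 * (Delta * C0 sigma x - 1) by apply: mulr_ge0; rewrite /P0; nra.
  rewrite hB; move: hP0; rewrite /P0 => hP0; lra.
set g := fun s : R => - (iota0 b sigma s / s).
have g0 (s : R) : r' <= s -> 0 <= g s.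
  move=> hs; have := iota_up s hs; have s0 : 0 < s by lra.
  have : 0 < c * s `^ p by rewrite mulr_gt0 // powR_gt0.
  move=> h1 h2; rewrite /g -mulNr; apply: mulr_ge0; [lra|by rewrite invr_ge0 ltW].
have gup (s : R) : r' <= s -> c * s `^ p / s <= g s.
  move=> hs; have := iota_up s hs; have s0 : 0 < s by lra.
  move=> h; rewrite /g -mulNr; apply: ler_wpM2r; [by rewrite invr_ge0 ltW|lra].
have glow (u : R) : exists L, 0 <= L /\ forall s, r' <= s <= u -> g s <= L.
  have [L [L0 hL]] := iota_low u; exists L; split => // s /andP[hs1 hs2].
  have s0 : 0 < s by lra.
  have := hL s; rewrite hs1 hs2 => /(_ isT) h.
  rewrite /g -mulNr ler_pdivrMr // ; nra.
have Neq (v : R) : (\int[lebesgue_measure]_(s in `[r', v]) (iota0 b sigma s / s)%:E =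
    - \int[lebesgue_measure]_(s in `[r', v]) (g s)%:E)%E.
  rewrite -integral_ge0N; last first.
    by move=> s /=; rewrite in_itv /= => /andP[hs _]; rewrite lee_fin g0.
  by apply: eq_integral => s _; rewrite /g EFinN oppeK.
have Nfin (u : R) : r' <= u -> (\int[lebesgue_measure]_(s in `[r', u]) (g s)%:E =
    (fine (\int[lebesgue_measure]_(s in `[r', u]) (g s)%:E))%:E)%E.
  move=> hu; have [L [L0 hL]] := glow u.
  have i0 : (0 <= \int[lebesgue_measure]_(s in `[r', u]) (g s)%:E)%E.
    by apply: integral_ge0 => s /=; rewrite in_itv /= => /andP[hs _]; rewrite lee_fin g0.
  rewrite fineK // ge0_fin_numE //.
  apply: le_lt_trans (_ : _ <= (L * (u - r'))%:E)%E (ltry _).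
  rewrite -integral_itv_cst //; apply: nm_le_integral => s /=; rewrite in_itv /= => /andP[hs1 hs2].
    by rewrite lee_fin g0.
  by rewrite lee_fin hL // hs1 hs2.
set nn := fun u : R => fine (\int[lebesgue_measure]_(s in `[r', u]) (g s)%:E).
have I0n (u : R) : r' <= u -> I0 b sigma r' u = - nn u.
  move=> hu; rewrite /I0 /Rintegral Neq Nfin //.
have nn0 (u : R) : r' <= u -> 0 <= nn u.
  move=> hu; apply: fine_ge0; apply: integral_ge0 => s /=; rewrite in_itv /= => /andP[hs _].
  by rewrite lee_fin g0.
have nmono (u v : R) : r' <= v -> v <= u -> nn v <= nn u.
  move=> hv vu; rewrite -lee_fin -!Nfin //; last lra.
  apply: itv_le_integral => // s /andP[hs _]; exact: g0.
have nlow (u : R) : 2 * r' <= u -> c / 2 * (u / 2) `^ p <= nn u.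
  move=> hu; have u0 : 0 < u by lra.
  set m := c * (u / 2) `^ p / u.
  have hm : c / 2 * (u / 2) `^ p = m * (u - u / 2).
    by rewrite /m; field; rewrite gt_eqF.
  rewrite hm -lee_fin -Nfin; last lra.
  rewrite -integral_itv_cst; last lra.
  rewrite integral_mkcond [X in (_ <= X)%E]integral_mkcond.
  apply: nm_le_integral => x _; rewrite /patch.
    by case: ifPn => // _; rewrite lee_fin /m; apply: divr_ge0; [apply: mulr_ge0; [lra|apply: powR_ge0]|lra].
  case: ifPn => [/set_mem|_].
    rewrite /= in_itv /= => /andP[hx1 hx2].
    rewrite ifT; last by apply/mem_set; rewrite /= in_itv /= hx2 andbT; lra.
    rewrite lee_fin; apply: le_trans (gup x _); last lra.
    rewrite /m -(mulrA c _ u^-1) -(mulrA c _ x^-1); apply: ler_pM.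
    - exact: ltW.
    - by apply: mulr_ge0; [apply: powR_ge0|rewrite invr_ge0; lra].
    - done.
    - apply: ler_pM.
      + exact: powR_ge0.
      + by rewrite invr_ge0; lra.
      + apply: ge0_ler_powR; [lra| rewrite nnegrE; lra| rewrite nnegrE; lra| done].
      + by rewrite lef_pV2 ?posrE; lra.
  case: ifPn => // /set_mem /=; rewrite in_itv /= => /andP[hx1 hx2].
  by rewrite lee_fin g0.
have I0_le0 (u : R) : r' <= u -> I0 b sigma r' u <= 0.
  by move=> hu; rewrite I0n // oppr_le0 nn0.
have I0_mono (u v : R) : r' <= v -> v <= u -> I0 b sigma r' u <= I0 b sigma r' v.
  by move=> hv vu; rewrite !I0n //; [rewrite lerN2 nmono|lra].
have I0_up (u : R) : 2 * r' <= u -> I0 b sigma r' u <= - (c / 2 * (u / 2) `^ p).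
  by move=> hu; rewrite I0n; [rewrite lerN2 nlow|lra].
have ga_low (u : R) : r' <= u -> Delta^-1 <= gamma0 sigma u.
  move=> hu; have u0 : 0 < u by lra.
  rewrite /gamma0; apply: lb_le_inf.
    by exists (C0 sigma (u *: e0)), (u *: e0) => //; apply: sph_e0; lra.
  move=> _ [x hx <-]; have [x0 hxu] := sph u x u0 hx.
  have hr : r0 <= enorm x by rewrite hxu; lra.
  by have /andP[] := hC0 x x0 hr.
have Jb (u : R) : r' <= u ->
    0 <= \int[lebesgue_measure]_(v in `[r', u]) expR (- I0 b sigma r' v) <=
    (u - r') * expR (- I0 b sigma r' u).
  move=> hu; rewrite /Rintegral; apply/andP; split.
    by apply: fine_ge0; apply: integral_ge0 => v _; rewrite lee_fin expR_ge0.
  apply: fine_le_bound; first by apply: integral_ge0 => v _; rewrite lee_fin expR_ge0.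
  rewrite (mulrC (u - r')) -(@integral_itv_cst R r' u (expR (- I0 b sigma r' u))); last exact: hu.
  apply: nm_le_integral => v /=; rewrite in_itv /= => /andP[hv1 hv2].
    by rewrite lee_fin expR_ge0.
  by rewrite lee_fin ler_expR lerN2 I0_mono.
set ka := (1 - alpha) * (c / 2).
have ka0 : 0 < ka by apply: mulr_gt0; [lra|apply: divr_gt0].
set mm := 3 / p.
have mm0 : 0 < mm by apply: divr_gt0.
set A := (ka / mm) `^ mm.
have A0 : 0 < A by apply: powR_gt0; apply: divr_gt0.
have expo (w : R) : 0 <= w -> A * w ^+ 3 <= expR (ka * w `^ p).
  move=> w0; have hy : 0 <= ka * w `^ p by apply: mulr_ge0; [lra|apply: powR_ge0].
  apply: le_trans (@powR_le_expR R _ _ hy mm0).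
  rewrite mulrAC powRM; last 2 first.
  - by apply: divr_ge0; lra.
  - exact: powR_ge0.
  have pm : p * mm = 3%:R by rewrite /mm mulrC divfK // gt_eqF.
  by rewrite -powRrM pm powR_mulrn.
set K := 12 * Delta / A + Delta * (2 * r' + 1) * (2 * r') ^+ 2.
have K0 : 0 <= K.
  rewrite /K; apply: addr_ge0; first by apply: divr_ge0; [lra|exact: ltW].
  by apply: mulr_ge0; [apply: mulr_ge0; lra|apply: sqr_ge0].
have Gb (u : R) : r' <= u ->
    0 <= (\int[lebesgue_measure]_(v in `[r', u]) expR (- I0 b sigma r' v) + 1)
          `^ alpha * expR (I0 b sigma r' u) / gamma0 sigma u <= K / u ^+ 2.
  move=> hu; have /andP[J0 J1] := Jb u hu.
  exact: (G_bound halpha hDelta r'1 hu J0 J1 (I0_le0 u hu) (ga_low u hu) (I0_up u) erefl A0 expo).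
have r'0 : 0 < r' by lra.
exists r'; split; first lra.
apply: le_lt_trans (_ : (_ <= (K / r')%:E)%E) (ltry _).
rewrite -(@int_inv2 R r' K r'0 K0).
apply: nm_le_integral => u /=; rewrite in_itv /= andbT => hu; rewrite lee_fin;
  by have /andP[] := Gb u hu.
Qed.
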